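(* Let $\mathcal{X}=\langle P,K,V\rangle$ be a polyhedral model, $x\in P$, and $\sigma\in K$ the unique simplex with $x\in\tilde\sigma$. For every SLCS formula $\phi$: $\mathcal{X},x\models\phi$ if and only if $\mathcal{M}(\mathcal{X}),\tilde\sigma\models\phi$.
   Context: A $d$-simplex $\sigma\subseteq\mathbb{R}^m$ is the convex hull of $d+1$ affinely independent points $v_0,\dots,v_d$ (its vertices); the simplexes spanned by subsets of the vertices (including the empty simplex) are its faces, and $\tau\preceq\sigma$ means $\tau$ is a face of $\sigma$. The relative interior of $\sigma$ is $\tilde\sigma=\{\sum_i\lambda_iv_i:\lambda_i\in(0,1],\sum_i\lambda_i=1\}$. A simplicial complex $K$ is a finite set of simplexes of $\mathbb{R}^m$ closed under taking faces and such that the intersection of any two of its simplexes is a face of both. Its polyhedron is $|K|=\bigcup K$, with the subspace topology of $\mathbb{R}^m$; $\mathcal{C}$ and $\mathcal{I}$ denote closure and interior in this space. The cells of $K$ are the sets $\tilde\sigma$ for nonempty $\sigma\in K$; they form a partition $\tilde K$ of $|K|$. A path in a space $P$ is a continuous $\pi:[0,1]\to P$; $\pi(S)=\{\pi(s):s\in S\}$. Fix a finite set $AP$ of atomic propositions. A polyhedral model is $\mathcal{X}=\langle P,K,V\rangle$ with $K$ a simplicial complex, $P=|K|$, and $V:AP\to\mathcal{P}(P)$ such that each $V(p)$ is a union of cells of $K$ ($K$ is then called coherent with the model). SLCS formulas: $\phi::=\top\mid p\mid\neg\phi\mid\phi\wedge\phi\mid\Box\phi\mid\gamma(\phi,\phi)$,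 $p\in AP$. Semantics at $x\in P$, with $[\![\phi]\!]=\{x\in P:\mathcal{X},x\models\phi\}$: $\top$ always holds; $x\models p$ iff $x\in V(p)$; Boolean connectives as usual; $x\models\Box\phi$ iff $x\in\mathcal{I}([\![\phi]\!])$; $x\models\gamma(\phi,\psi)$ iff there is a path $\pi$ in $P$ with $\pi(0)=x$, $\pi((0,1))\subseteq[\![\phi]\!]$ and $\pi(1)\in[\![\psi]\!]$. The finite Kripke model $\mathcal{M}(\mathcal{X})$ has as states the cells of $K$, accessibility relation $\tilde\sigma\,\tilde\preceq\,\tilde\tau$ iff $\sigma\preceq\tau$, and valuation $V_M(p)=\{\tilde\sigma:\tilde\sigma\subseteq V(p)\}$. A $\pm$-path in $\mathcal{M}(\mathcal{X})$ is a map $\pi:\{0,\dots,k\}\to\tilde K$ with $k\ge2$ such that $\pi(0)\,\tilde\preceq\,\pi(1)$, $\pi(k)\,\tilde\preceq\,\pi(k-1)$, and for each $i<k$ either $\pi(i)\,\tilde\preceq\,\pi(i+1)$ or $\pi(i+1)\,\tilde\preceq\,\pi(i)$. Satisfaction in $\mathcal{M}(\mathcal{X})$ at a cell $\tilde\sigma$, with $[\![\phi]\!]_M$ the set of satisfying cells: $\top$ always; $p$ iff $\tilde\sigma\in V_M(p)$; Booleans as usual; $\tilde\sigma\models\Box\phi$ iff every $\tilde\tau$ with $\tilde\sigma\,\tilde\preceq\,\tilde\tau$ satisfies $\phi$; $\tilde\sigma\models\gamma(\phi,\psi)$ iff there is a $\pm$-path $\pi:\{0,\dots,k\}\to\tilde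 K$ with $\pi(0)=\tilde\sigma$, $\pi(\{1,\dots,k-1\})\subseteq[\![\phi]\!]_M$ and $\pi(k)\in[\![\psi]\!]_M$. *)

(* Defs.v *)
(* Points of R^m are row vectors 'rV[R]_m
   (with the library's canonical topology on matrices, the product topology,
   which coincides with the Euclidean one). *)
From mathcomp Require Import all_boot all_algebra all_classical all_reals all_analysis.
From mathcomp Require Import finmap.
Import numFieldNormedType.Exports.
Set Implicit Arguments. Unset Strict Implicit. Unset Printing Implicit Defensive.
Local Open Scope classical_set_scope.
Local Open Scope ring_scope.

Section Polyhedra.
Variables (R : realType) (m : nat).
Local Notation pt := 'rV[R]_m.

(* A simplex is represented by its (finite) set of vertices. *)
Definition aff_indep (V : {fset pt}) : Prop :=
  forall l : pt -> R,
    \sum_(v <- V) l v = 0 -> \sum_(v <- V) l v *: v = 0 ->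
    forall v, v \in V -> l v = 0.

Definition hull (V : {fset pt}) : set pt :=
  [set x | exists l : pt -> R,
     (forall v, v \in V -> 0 <= l v) /\ \sum_(v <- V) l v = 1 /\
     x = \sum_(v <- V) l v *: v].

Definition relint (V : {fset pt}) : set pt :=
  [set x | exists l : pt -> R,
     (forall v, v \in V -> 0 < l v <= 1) /\ \sum_(v <- V) l v = 1 /\
     x = \sum_(v <- V) l v *: v].

Definition face (tau sigma : {fset pt}) : Prop := (tau `<=` sigma)%fset.

Definition simplicial_complex (K : {fset {fset pt}}) : Prop :=
  (forall s, s \in K -> aff_indep s) /\
  (forall s t, s \in K -> face t s -> t \in K) /\
  (forall s t, s \in K -> t \in K ->
     exists W1 W2, face W1 s /\ face W2 t /\
       hull W1 = hull s `&` hull t /\ hull W2 = hull s `&` hull t).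

Definition polyhedron (K : {fset {fset pt}}) : set pt :=
  [set x | exists2 s, s \in K & hull s x].

(* cells are relative interiors of nonempty simplexes of K *)
Definition is_cell_of (K : {fset {fset pt}}) (s : {fset pt}) : Prop :=
  s \in K /\ s != fset0.

Definition coherent (AP : Type) (K : {fset {fset pt}}) (V : AP -> set pt) : Prop :=
  forall p, exists C : set {fset pt},
    (forall s, C s -> is_cell_of K s) /\
    V p = \bigcup_(s in C) relint s.

End Polyhedra.

Inductive slcs (AP : Type) : Type :=
  | FTop
  | FAtom of AP
  | FNeg of slcs AP
  | FAnd of slcs AP & slcs AP
  | FBox of slcs AP
  | FGamma of slcs AP & slcs AP.
Arguments FTop {AP}.

Section Semantics.
Variables (R : realType) (m : nat) (AP : Type).
Local Notation pt := 'rV[R]_m.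
Variables (K : {fset {fset pt}}) (V : AP -> set pt).
Local Notation P := (polyhedron K).

Definition sinterior (S : set pt) : set pt :=
  [set x | exists U : set pt, open U /\ U x /\ U `&` P `<=` S].

Fixpoint sat (f : slcs AP) (x : pt) : Prop :=
  match f with
  | FTop => True
  | FAtom p => V p x
  | FNeg g => ~ sat g x
  | FAnd g h => sat g x /\ sat h x
  | FBox g => sinterior (fun y => P y /\ sat g y) x
  | FGamma g h =>
      exists pi : R -> pt,
        {within `[0, 1], continuous pi} /\
        (forall s, 0 <= s <= 1 -> P (pi s)) /\
        pi 0 = x /\
        (forall s, 0 < s < 1 -> P (pi s) /\ sat g (pi s)) /\
        (P (pi 1) /\ sat h (pi 1))
  end.

(* Kripke model M(X): states are cells (nonempty simplexes of K),
   accessibility is the face relation *)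
Definition VM (p : AP) (s : {fset pt}) : Prop := relint s `<=` V p.

Definition pm_path (pi : nat -> {fset pt}) (k : nat) : Prop :=
  (2 <= k)%N /\
  (forall i, (i <= k)%N -> is_cell_of K (pi i)) /\
  face (pi 0%N) (pi 1%N) /\ face (pi k) (pi k.-1) /\
  (forall i, (i < k)%N -> face (pi i) (pi i.+1) \/ face (pi i.+1) (pi i)).

Fixpoint satM (f : slcs AP) (s : {fset pt}) : Prop :=
  match f with
  | FTop => True
  | FAtom p => VM p s
  | FNeg g => ~ satM g s
  | FAnd g h => satM g s /\ satM h s
  | FBox g => forall t, is_cell_of K t -> face s t -> satM g t
  | FGamma g h =>
      exists (pi : nat -> {fset pt}) (k : nat),
        pm_path pi k /\ pi 0%N = s /\
        (forall i, (1 <= i)%N -> (i <= k.-1)%N -> satM g (pi i)) /\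
        satM h (pi k)
  end.

End Semantics.

(* Main.v *)
Require Import Defs.
From mathcomp Require Import all_boot all_order all_algebra all_classical all_reals all_analysis.
From mathcomp Require Import finmap ring lra zify.
Import numFieldNormedType.Exports.
Import Order.TTheory GRing.Theory Num.Theory Num.Def.
Set Implicit Arguments. Unset Strict Implicit. Unset Printing Implicit Defensive.
Local Open Scope classical_set_scope.
Local Open Scope ring_scope.

Section Geo.
Variables (R : realType) (m : nat).
Local Notation pt := 'rV[R]_m.
Implicit Types (s t W : {fset pt}) (x y z v : pt).

Definition lz (W : {fset pt}) (l : pt -> R) := fun v => if v \in W then l v else 0.

Lemma sum_lz W s l : (W `<=` s)%fset ->
  \sum_(v <- s) lz W l v = \sum_(v <- W) l v.
Proof.
move=> Ws; rewrite -(big_fset_incl _ Ws); last by move=> v _ /negbTE; rewrite /lz => ->.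
by apply: eq_fbigr => v vW _; rewrite /lz vW.
Qed.

Lemma sumZ_lz W s l : (W `<=` s)%fset ->
  \sum_(v <- s) lz W l v *: v = \sum_(v <- W) l v *: v.
Proof.
move=> Ws; rewrite -(big_fset_incl _ Ws); last first.
  by move=> v _ /negbTE; rewrite /lz => ->; rewrite scale0r.
by apply: eq_fbigr => v vW _; rewrite /lz vW.
Qed.

Lemma hull_sub W s : (W `<=` s)%fset -> hull W `<=` hull s.
Proof.
move=> Ws x [l [l0 [l1 ->]]]; exists (lz W l); split; last split.
- by move=> v _; rewrite /lz; case: ifP => // /l0.
- by rewrite sum_lz.
- by rewrite sumZ_lz.
Qed.

Lemma relint_hull s : relint s `<=` hull s.
Proof.
by move=> x [l [l0 [l1 ->]]]; exists l; split=> // v /l0 /andP[/ltW].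
Qed.

Lemma hull_vertex s v : v \in s -> hull s v.
Proof.
move=> vs; exists (fun w => if w == v then 1 else 0); split; last split.
- by move=> w _; case: ifP.
- rewrite (big_fsetD1 _ vs) /= eqxx big1_fset ?addr0 // => w.
  by rewrite in_fsetD1 => /andP[/negbTE -> _].
- rewrite (big_fsetD1 _ vs) /= eqxx scale1r big1_fset ?addr0 // => w.
  by rewrite in_fsetD1 => /andP[/negbTE -> _]; rewrite scale0r.
Qed.

Lemma hull1 v y : hull [fset v]%fset y -> y = v.
Proof.
by move=> [l [_ [+ ->]]]; rewrite !big_seq_fset1 => ->; rewrite scale1r.
Qed.

Lemma relint1 v : relint [fset v]%fset v.
Proof.
exists (fun _ => 1); split; first by move=> *; rewrite ltr01 lexx.
by rewrite !big_seq_fset1 scale1r.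
Qed.

Lemma coef_uniq s (a b : pt -> R) : aff_indep s ->
  \sum_(v <- s) a v = 1 -> \sum_(v <- s) b v = 1 ->
  \sum_(v <- s) a v *: v = \sum_(v <- s) b v *: v ->
  forall v, v \in s -> a v = b v.
Proof.
move=> ai a1 b1 ab v vs; apply/eqP; rewrite -subr_eq0; apply/eqP.
apply: (ai (fun w => a w - b w)) => //.
  by rewrite sumrB a1 b1 subrr.
by under eq_bigr do rewrite scalerBl; rewrite sumrB ab subrr.
Qed.

Lemma le_sum1 s (l : pt -> R) v : (forall w, w \in s -> 0 <= l w) -> v \in s ->
  l v <= \sum_(w <- s) l w.
Proof.
move=> l0 vs; rewrite (big_fsetD1 _ vs) /= lerDl big_seq sumr_ge0 // => w.
by rewrite in_fsetD1 => /andP[_ /l0].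
Qed.

Lemma support s x : hull s x ->
  exists W, [/\ (W `<=` s)%fset, W != fset0 & relint W x].
Proof.
move=> [l [l0 [l1 ->]]].
pose W := [fset v in s | 0 < l v]%fset.
have Ws : (W `<=` s)%fset by apply/fsubsetP => v; rewrite !inE /= => /andP[].
have zero v : v \in s -> v \notin W -> l v = 0.
  move=> vs; rewrite !inE /= vs /= => /negbTE lv.
  by apply/eqP; rewrite eq_le l0 // andbT leNgt lv.
have sW : \sum_(v <- s) l v = \sum_(v <- W) l v.
  by rewrite (big_fset_incl _ Ws) // => v vs vW; rewrite zero.
have sZW : \sum_(v <- s) l v *: v = \sum_(v <- W) l v *: v.
  by rewrite (big_fset_incl _ Ws) // => v vs vW; rewrite zero // scale0r.
exists W; split => //.
  apply/negP => /eqP W0; move: l1; rewrite sW W0 big_seq_fset0 => /eqP.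
  by rewrite eq_sym oner_eq0.
exists l; split; last by rewrite -sW -sZW.
move=> v vW; have := vW; rewrite !inE /= => /andP[vs ->] /=.
by rewrite -l1 sW le_sum1 // => w; rewrite !inE /= => /andP[_ /ltW].
Qed.

Lemma barycenter s : s != fset0 -> exists y, relint s y.
Proof.
move=> s0; have n0 : (0 < #|` s|)%N by rewrite cardfs_gt0.
have nR : (#|` s|%:R : R) != 0 by rewrite pnatr_eq0 -lt0n.
pose c : R := (#|` s|%:R)^-1.
have sc : \sum_(v <- s) c = 1.
  have -> : \sum_(v <- s) c = \sum_(v <- s) 1 * c.
    by apply: eq_bigr => *; rewrite mul1r.
  rewrite -mulr_suml.
  have -> : \sum_(v <- s) (1 : R) = #|` s|%:R.
    by rewrite card_fset_sum1 natr_sum.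
  by rewrite mulfV.
exists (\sum_(v <- s) c *: v), (fun=> c); split => //.
move=> v _; rewrite invr_gt0 ltr0n n0 /= invf_le1 ?ltr0n //.
by rewrite ler1n.
Qed.

Lemma segment s t y z (lam : R) : (s `<=` t)%fset -> hull s y -> relint t z ->
  0 < lam <= 1 -> relint t ((1 - lam) *: y + lam *: z).
Proof.
move=> st [a [a0 [a1 ->]]] [b [b0 [b1 ->]]] /andP[l0 l1].
pose c v := (1 - lam) * lz s a v + lam * b v.
have c0 v : v \in t -> 0 < c v.
  move=> vt; rewrite /c ltr_wpDl //.
    rewrite mulr_ge0 ?subr_ge0 // /lz; case: ifP => // /a0 //.
  by rewrite mulr_gt0 //; case/andP: (b0 _ vt).
have c1 : \sum_(v <- t) c v = 1.
  rewrite big_split /= -!mulr_sumr sum_lz // a1 b1; ring.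
exists c; split; last split => //.
  move=> v vt; rewrite c0 //= -c1 le_sum1 // => w /c0 /ltW //.
rewrite -(sumZ_lz a st) !scaler_sumr -big_split /=.
by apply: eq_bigr => v _; rewrite /c [RHS]scalerDl !scalerA.
Qed.


Section Cplx.
Variable K : {fset {fset pt}}.
Hypothesis SC : simplicial_complex K.

Lemma SC_face s t : s \in K -> (t `<=` s)%fset -> t \in K.
Proof. by case: SC => _ [+ _] => H sK ts; apply: H sK _. Qed.

Lemma U1 s t x : s \in K -> t \in K -> relint s x -> hull t x -> hull s `<=` hull t.
Proof.
move=> sK tK xs xt; case: SC => ai [_ inter].
have [W1 [W2 [W1s [_ [hW1 _]]]]] := inter s t sK tK.
have xW1 : hull W1 x by rewrite hW1; split => //; exact: relint_hull.
have sW1 : (s `<=` W1)%fset.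
  case: xs => a [a0 [a1 xa]]; case: xW1 => b [b0 [b1 xb]].
  apply/fsubsetP => v vs; apply/negPn/negP => vW.
  have := coef_uniq (b := lz W1 b) (ai _ sK) a1 _ _ vs.
  rewrite /lz (negbTE vW) sum_lz // sumZ_lz // -xa -xb => /(_ b1 erefl) av.
  by move: (a0 _ vs); rewrite av ltxx.
have : hull s `<=` hull W1 by apply: hull_sub.
by rewrite hW1 => H y /H [].
Qed.

Lemma cell_uniq s t x : s \in K -> t \in K -> relint s x -> relint t x -> s = t.
Proof.
suff H : forall s t x, s \in K -> t \in K -> relint s x -> relint t x ->
    (s `<=` t)%fset.
  move=> sK tK xs xt; apply/eqP; rewrite eqEfsubset.
  by rewrite (H s t x) // (H t s x).
move=> {}s {}t {}x sK tK xs xt; apply/fsubsetP => v vs.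
have vt : hull t v by apply: (U1 sK tK xs (relint_hull xt)); exact: hull_vertex.
have [t' [t't t'0 vt']] := support vt.
have t'K : t' \in K := SC_face tK t't.
have vK : [fset v]%fset \in K by apply: (SC_face sK); rewrite fsub1set.
have H := U1 t'K vK vt' (hull_vertex (fset11 v)).
case/fset0Pn: t'0 => w wt'.
have := H _ (hull_vertex wt') => /hull1 wv.
by apply: (fsubsetP t't); rewrite -wv.
Qed.

Lemma P_cell y : polyhedron K y -> exists t, is_cell_of K t /\ relint t y.
Proof.
case=> s sK /support [W [Ws W0 yW]]; exists W; split => //.
by split => //; apply: SC_face sK Ws.
Qed.

Lemma hull_cell_face s t x : s \in K -> t \in K -> relint s x -> hull t x ->
  (s `<=` t)%fset.
Proof.
move=> sK tK xs /support [W [Wt W0 xW]].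
by rewrite (cell_uniq sK (SC_face tK Wt) xs xW).
Qed.

End Cplx.

Lemma cont_sum (T : topologicalType) (I : Type) (r : seq I) (F : I -> T -> pt) :
  (forall i, continuous (F i)) -> continuous (fun u => \sum_(i <- r) F i u).
Proof.
move=> Fc; elim: r => [|a r IH].
  by under eq_fun do rewrite big_nil; exact: cst_continuous.
under eq_fun do rewrite big_cons.
by move=> u; apply: continuousD; [exact: Fc|exact: IH].
Qed.

Lemma cont_sumR (T : topologicalType) (I : Type) (r : seq I) (F : I -> T -> R) :
  (forall i, continuous (F i)) -> continuous (fun u => \sum_(i <- r) F i u).
Proof.
move=> Fc; elim: r => [|a r IH].
  by under eq_fun do rewrite big_nil; exact: cst_continuous.
under eq_fun do rewrite big_cons.
by move=> u; apply: continuousD; [exact: Fc|exact: IH].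
Qed.

Lemma hull_closed s : closed (hull s).
Proof.
pose n := size (enum_fset s).
pose D := [set r : 'rV[R]_n | forall i, `[0, 1]%classic (r ord0 i)] `&`
          [set r : 'rV[R]_n | \sum_(i < n) r ord0 i = 1].
have Dc : compact D.
  apply: compact_closedI; first by apply: (@rV_compact R n (fun _ => `[(0:R), 1]%classic)) => i; exact: segment_compact.
  apply: (@preimage_closed _ _ (fun r : 'rV[R]_n => \sum_(i < n) r ord0 i) [set 1]).
    move=> r _; apply: cont_sumR => i; exact: coord_continuous.
  exact: closed_eq.
pose g (r : 'rV[R]_n) := \sum_(i < n) r ord0 i *: nth 0 s i.
have gc : continuous g.
  apply: cont_sum => i r; apply: continuousZr_tmp; exact: coord_continuous.
suff -> : hull s = g @` D.
  apply: compact_closed; first exact: norm_hausdorff.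
  by apply: continuous_compact => //; exact: continuous_subspaceT.
have us : uniq (enum_fset s) := fset_uniq s.
apply/seteqP; split.
  move=> x [l [l0 [l1 ->]]]; exists (\row_(i < n) l (nth 0 s i)).
    split.
      move=> i; rewrite mxE /= in_itv /=.
      have ins : nth 0 s i \in s by rewrite mem_nth.
      by rewrite l0 //= -l1 le_sum1.
    by rewrite -l1 (big_nth 0) big_mkord; apply: eq_bigr => i _; rewrite mxE.
  by rewrite /g (big_nth 0) big_mkord; apply: eq_bigr => i _; rewrite mxE.
move=> _ [r [r01 r1] <-].
pose l v := oapp (fun i : 'I_n => r ord0 i) 0 (insub (index v s)).
have lE (i : 'I_n) : l (nth 0 s i) = r ord0 i.
  by rewrite /l index_uniq // valK.
exists l; split; last split.
- move=> v _; rewrite /l; case: insub => //= i.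
  by have := r01 i; rewrite /= in_itv /= => /andP[].
- by rewrite -r1 (big_nth 0) big_mkord; apply: eq_bigr => i _; rewrite lE.
- by rewrite /g (big_nth 0) big_mkord; apply: eq_bigr => i _; rewrite lE.
Qed.

Lemma within_comp (T U W : topologicalType) (A : set T) (B : set U) (h : T -> U)
  (p : U -> W) : (forall a, A a -> B (h a)) -> continuous h ->
  {within B, continuous p} -> {within A, continuous (p \o h)}.
Proof.
move=> hAB hc /subspace_continuousP pc; apply/subspace_continuousP => a At.
have H1 := pc _ (hAB _ At).
have H2 : h @ within A (nbhs a) `=>` within B (nbhs (h a)).
  move=> Q HQ.
  change (nbhs (h a) (fun u => B u -> Q u)) in HQ.
  change (nbhs a (fun w => A w -> Q (h w))).
  have H3 : nbhs a (h @^-1` (fun u => B u -> Q u)) := hc a _ HQ.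
  apply: (@filterS _ _ _ _ _ _ H3) => b /= Hs As; exact: Hs (hAB _ As).
exact: (cvg_comp h p H2 H1).
Qed.

Lemma within_eps (T : topologicalType) (p : R -> T) (A : set R) (a : R) (U : set T) :
  {within A, continuous p} -> A a -> open U -> U (p a) ->
  exists2 e : R, 0 < e & forall b, A b -> `|a - b| < e -> U (p b).
Proof.
move=> /subspace_continuousP pc At oU Ut.
have := pc _ At U; rewrite /within /=.
have /[swap]/[apply] : nbhs (p a) U by apply: open_nbhs_nbhs.
move=> /nbhs_ballP [e e0 He]; exists e => // b As ts; exact: He.
Qed.

Lemma open_avoid (r : seq {fset pt}) x :
  open [set y | forall t, t \in r -> ~ hull t x -> ~ hull t y].
Proof.
elim: r => [|a r IH].
  rewrite (_ : [set y | _] = setT); first exact: openT.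
  by apply/seteqP; split => // y _ t; rewrite in_nil.
rewrite (_ : [set y | _] = [set y | ~ hull a x -> ~ hull a y] `&`
   [set y | forall t, t \in r -> ~ hull t x -> ~ hull t y]).
  apply: openI => //; case: (pselect (hull a x)) => hax.
    rewrite (_ : [set y | _] = setT); first exact: openT.
    by apply/seteqP; split => // y _ /(_ hax).
  rewrite (_ : [set y | _] = ~` hull a); first exact/closed_openC/hull_closed.
  by apply/seteqP; split => y /=; [move/(_ hax)|move=> ? _].
apply/seteqP; split => y /=.
  by move=> H; split => [|t tr]; apply: H; rewrite in_cons ?eqxx ?tr ?orbT.
by move=> [H1 H2] t; rewrite in_cons => /orP[/eqP ->|]; [exact: H1|exact: H2].
Qed.

Lemma approach s t x (U : set pt) : (s `<=` t)%fset -> hull s x -> t != fset0 ->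
  open U -> U x -> exists y, U y /\ relint t y.
Proof.
move=> st hx t0 oU Ux; have [b bt] := barycenter t0.
pose f (l : R) := x + l *: (b - x).
have fc : continuous f.
  move=> l; apply: (@continuousD R _ R (fun=> x) (fun l : R => l *: (b - x)) l).
    exact: cst_continuous.
  by apply: continuousZr_tmp; exact: cvg_id.
have f0 : U (f 0) by rewrite /f scale0r addr0.
have [e e0 He] := within_eps (continuous_subspaceT (A := setT) fc) I oU f0.
pose lam := minr (e / 2) 1.
have lam0 : 0 < lam by rewrite lt_min ltr01 divr_gt0.
have lam1 : lam <= 1 by rewrite ge_min lexx orbT.
exists (f lam); split.
  apply: He => //; rewrite sub0r normrN gtr0_norm //.
  by apply: (le_lt_trans (y := e / 2)); [rewrite ge_min lexx|rewrite ltr_pdivrMr // ltr_pMr // ltr1n].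
have -> : f lam = (1 - lam) *: x + lam *: b.
  by rewrite /f scalerBl scale1r scalerBr [lam *: b - _]addrC addrA.
by apply: segment st hx bt _; rewrite lam0 lam1.
Qed.

Definition PS (Q S : set pt) (y z : pt) := exists pi : R -> pt,
  [/\ {within `[0, 1]%classic, continuous pi}, pi 0 = y, pi 1 = z,
      forall u, 0 <= u <= 1 -> Q (pi u) & forall u, 0 < u < 1 -> S (pi u)].

Lemma PS_rev Q S y z : PS Q S y z -> PS Q S z y.
Proof.
move=> [p [pc p0 p1 pQ pS]]; exists (p \o (fun u => 1 - u)); split => /=.
- apply: within_comp pc.
    by move=> a; rewrite /= !in_itv /= => /andP[a0 a1]; apply/andP; split; lra.
  move=> a; apply: (@continuousB R R^o R (fun=> 1) (fun l : R => l) a).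
    exact: cst_continuous.
  exact: cvg_id.
- by rewrite subr0.
- by rewrite subrr.
- by move=> u /andP[u0 u1]; apply: pQ; apply/andP; split; lra.
- by move=> u /andP[u0 u1]; apply: pS; apply/andP; split; lra.
Qed.

Lemma PS_seg Q S y z : (forall u, 0 <= u <= 1 -> Q (y + u *: (z - y))) ->
  (forall u, 0 < u < 1 -> S (y + u *: (z - y))) -> PS Q S y z.
Proof.
move=> HQ HS; exists (fun u => y + u *: (z - y)); split => //.
- apply: continuous_subspaceT => u.
  apply: (@continuousD R _ R (fun=> y) (fun l : R => l *: (z - y)) u).
    exact: cst_continuous.
  by apply: continuousZr_tmp; exact: cvg_id.
- by rewrite scale0r addr0.
- by rewrite scale1r addrC subrK.
Qed.

Lemma PS_cat Q S y z w : PS Q S y z -> PS Q S z w -> S z -> PS Q S y w.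
Proof.
move=> [p [pc p0 p1 pQ pS]] [q [qc q0 q1 qQ qS]] Sz.
pose c (u : R) := if u <= 2^-1 then p (2 * u) else q (2 * u - 1).
have c2 : continuous (fun u : R => 2 * u).
  by move=> a; apply: (@continuousM R R (fun=> 2) id a); [exact: cst_continuous|exact: cvg_id].
exists c; split.
- have -> : `[0, 1]%classic = `[0, 2^-1]%classic `|` `[2^-1, 1]%classic :> set R.
    apply/seteqP; split => u /=; rewrite !in_itv /=.
      move=> /andP[u0 u1]; case: (leP u (2^-1)) => h; [by left; rewrite u0|].
      by right; apply/andP; split; lra.
    by case=> /andP[? ?]; apply/andP; split; lra.
  apply: withinU_continuous; [exact: interval_closed|exact: interval_closed| |].
  + apply: (@subspace_eq_continuous _ _ _ (p \o (fun u => 2 * u))).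
      by move=> u; rewrite in_setE /= in_itv /= => /andP[_ H]; change (p (2 * u) = c u); rewrite /c H.
    apply: within_comp pc => //.
    by move=> a; rewrite /= !in_itv /= => /andP[a0 a1]; apply/andP; split; lra.
  + apply: (@subspace_eq_continuous _ _ _ (q \o (fun u => 2 * u - 1))).
      move=> u; rewrite in_setE /= in_itv /= => /andP[u0 u1].
      change (q (2 * u - 1) = c u); rewrite /c.
      case: ifP => // uh.
      have -> : u = 2^-1 by apply/eqP; rewrite eq_le uh u0.
      by rewrite mulfV ?pnatr_eq0 // subrr p1 q0.
    apply: within_comp qc.
      by move=> a; rewrite /= !in_itv /= => /andP[a0 a1]; apply/andP; split; lra.
    move=> a; apply: (@continuousB R R^o R (fun u => 2 * u) (fun=> 1) a).
      exact: c2.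
    exact: cst_continuous.
- by rewrite /c invr_ge0 ler0n mulr0.
- rewrite /c ifF; first by rewrite mulr1 (_ : 2 - 1 = 1 :> R) // ; lra.
  by apply/negbTE; rewrite -ltNge; lra.
- move=> u /andP[u0 u1]; rewrite /c; case: ifP => uh.
    by apply: pQ; apply/andP; split; lra.
  by apply: qQ; move/negbT: uh; rewrite -ltNge => uh; apply/andP; split; lra.
- move=> u /andP[u0 u1]; rewrite /c; case: ifP => uh.
    have [->|uh'] := eqVneq u (2^-1).
      by rewrite mulfV ?pnatr_eq0 // p1.
    apply: pS; have : u < 2^-1 by rewrite lt_neqAle uh' uh.
    by move=> ?; apply/andP; split; lra.
  by apply: qS; move/negbT: uh; rewrite -ltNge => uh; apply/andP; split; lra.
Qed.

Section Cplx2.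
Variable K : {fset {fset pt}}.
Hypothesis SC : simplicial_complex K.

Lemma star s x : s \in K -> relint s x ->
  exists U : set pt, [/\ open U, U x &
    forall y t, U y -> t \in K -> relint t y -> (s `<=` t)%fset].
Proof.
move=> sK xs.
exists [set y | forall t, t \in enum_fset K -> ~ hull t x -> ~ hull t y]; split.
- exact: open_avoid.
- by move=> t _.
move=> y t Uy tK yt; apply: (hull_cell_face SC sK tK xs).
by apply: contrapT => nh; exact: (Uy t tK nh (relint_hull yt)).
Qed.

Lemma hullP s y : s \in K -> hull s y -> polyhedron K y.
Proof. by move=> sK hy; exists s. Qed.

End Cplx2.
End Geo.

Section Main.
Variables (R : realType) (m : nat) (AP : finType).
Local Notation pt := 'rV[R]_m.
Variables (K : {fset {fset pt}}) (V : AP -> set pt).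
Hypothesis SC : simplicial_complex K.
Hypothesis coh : coherent K V.
Local Notation P := (polyhedron K).

Definition good (f : slcs AP) := forall (x : pt) (s : {fset pt}),
  is_cell_of K s -> relint s x -> (sat K V f x <-> satM K V f s).

Lemma conv_eq (y z : pt) (u : R) : y + u *: (z - y) = (1 - u) *: y + u *: z.
Proof. by rewrite scalerBl scale1r scalerBr [u *: z - _]addrC addrA. Qed.

Lemma gamma_back g h : good g -> good h -> forall x s,
  is_cell_of K s -> relint s x -> satM K V (FGamma g h) s -> sat K V (FGamma g h) x.
Proof.
move=> IHg IHh x s cs xs [pi [k [[k2 [cells [f01 [fk ful]]]] [pi0 [Hg Hh]]]]].
pose S := fun y => P y /\ sat K V g y.
have [f Hf] : {f : nat -> pt & forall i, (i <= k)%N -> relint (pi i) (f i)}.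
  apply: (@boolp.choice _ _ (fun i y => (i <= k)%N -> relint (pi i) y)) => i.
  case: (leqP i k) => ik; last by exists 0 => ik'; lia.
  by have [y yi] := barycenter (cells i ik).2; exists y.
pose xs' i := if i == 0%N then x else f i.
have Hx i : (i <= k)%N -> relint (pi i) (xs' i).
  by rewrite /xs'; case: eqP => [->|_]; [rewrite pi0|exact: Hf].
have Scell i y : (1 <= i)%N -> (i <= k.-1)%N -> relint (pi i) y -> S y.
  move=> i1 ik yi; have ci := cells i ltac:(lia).
  split; first exact: (hullP ci.1 (relint_hull yi)).
  by apply/(IHg y (pi i) ci yi); exact: Hg.
have seg_up i j : (i <= k)%N -> (1 <= j)%N -> (j <= k.-1)%N -> (pi i `<=` pi j)%fset ->
    PS P S (xs' i) (xs' j).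
  move=> ik j1 jk ij; apply: PS_seg => u /andP[u0 u1]; rewrite conv_eq.
    have [->|u0'] := eqVneq u 0.
      rewrite subr0 scale1r scale0r addr0.
      exact: (hullP (cells i ik).1 (relint_hull (Hx i ik))).
    have rj : relint (pi j) ((1 - u) *: xs' i + u *: xs' j).
      apply: (segment ij (relint_hull (Hx i ik)) (Hx j ltac:(lia))).
      by rewrite u1 andbT lt_neqAle eq_sym u0' u0.
    exact: (hullP (cells j ltac:(lia)).1 (relint_hull rj)).
  apply: (Scell j) => //; apply: (segment ij (relint_hull (Hx i ik)) (Hx j ltac:(lia))).
  by rewrite u0 ltW.
have Sx j : (1 <= j)%N -> (j <= k.-1)%N -> S (xs' j).
  by move=> j1 jk; apply: (Scell j) => //; apply: Hx; lia.
have main : forall j, (1 <= j)%N -> (j <= k.-1)%N -> PS P S x (xs' j).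
  elim=> [//|j IH] j1 jk.
  have [->|j0] := eqVneq j 0%N.
    by have := seg_up 0%N 1%N ltac:(lia) isT ltac:(lia) f01; rewrite /xs' eqxx.
  apply: (PS_cat (IH ltac:(lia) ltac:(lia))); last by apply: Sx; lia.
  case: (ful j ltac:(lia)) => hj.
    by apply: seg_up => //; lia.
  by apply: PS_rev; apply: seg_up => //; lia.
have [q [qc q0 q1 qQ qS]] : PS P S x (xs' k).
  apply: (PS_cat (main k.-1 ltac:(lia) (leqnn _))); last by apply: Sx; lia.
  apply: PS_rev; have := seg_up k k.-1 (leqnn _) ltac:(lia) (leqnn _) fk.
  done.
exists q; split => //; split => //; split => //; split => //.
have xk := Hx k (leqnn _); rewrite q1; split.
  exact: (hullP (cells k (leqnn _)).1 (relint_hull xk)).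
by apply/(IHh _ _ (cells k (leqnn _)) xk).
Qed.


Definition chain (g : slcs AP) (s : {fset pt}) (rho : nat -> {fset pt}) (j : nat) :=
  [/\ (1 <= j)%N, rho 0%N = s /\ (rho 0%N `<=` rho 1%N)%fset,
      (forall i, (i <= j)%N -> is_cell_of K (rho i)),
      (forall i, (i < j)%N -> (rho i `<=` rho i.+1)%fset \/ (rho i.+1 `<=` rho i)%fset) &
      (forall i, (1 <= i)%N -> (i <= j)%N -> satM K V g (rho i))].

Lemma chain_ext g s rho j t : chain g s rho j -> is_cell_of K t ->
  (rho j `<=` t)%fset \/ (t `<=` rho j)%fset -> satM K V g t ->
  chain g s (fun i => if (i <= j)%N then rho i else t) j.+1.
Proof.
move=> [j1 [r0 r01] rc rcmp rg] ct cmp gt; split => //.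
- by rewrite leq0n j1.
- by move=> i ij; case: ifP => // /rc.
- move=> i; rewrite ltnS => ij; rewrite ij; case: (ltngtP i j) => [iltj||->].
    exact: rcmp.
    by move=> jlti; lia.
  exact: cmp.
- by move=> i i1 ij; case: ifP => // /(rg _ i1).
Qed.

Lemma chain_end g h s rho j t : chain g s rho j -> is_cell_of K t ->
  (t `<=` rho j)%fset -> satM K V h t -> satM K V (FGamma g h) s.
Proof.
move=> [j1 [r0 r01] rc rcmp rg] ct tj ht.
exists (fun i => if (i <= j)%N then rho i else t), j.+1; split; last split.
- split; first by lia.
  split; first by move=> i ij; case: ifP => // /rc.
  split; first by rewrite leq0n j1.
  split; first by rewrite ltnn /= leqnn.
  move=> i; rewrite ltnS => ij; rewrite ij; case: (ltngtP i j) => [iltj||->].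
    exact: rcmp.
    by move=> jlti; lia.
  by right.
- by rewrite leq0n.
- split; first by move=> i i1 ij /=; rewrite ij; exact: rg.
  by rewrite ltnn.
Qed.

Lemma loc (p : R -> pt) (t : R) (tau : {fset pt}) :
  {within `[0, 1]%classic, continuous p} -> 0 <= t <= 1 ->
  is_cell_of K tau -> relint tau (p t) ->
  exists2 e : R, 0 < e & forall b, 0 <= b <= 1 -> `|t - b| < e ->
    forall t', t' \in K -> relint t' (p b) -> (tau `<=` t')%fset.
Proof.
move=> pc t01 ct pt'.
have [U [oU Ut HU]] := star SC ct.1 pt'.
have tA : `[0, 1]%classic t by rewrite /= in_itv /=.
have [e e0 He] := within_eps pc tA oU Ut.
exists e => // b b01 tb t' t'K rb; apply: (HU (p b)) => //.
by apply: He => //; rewrite /= in_itv /=.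
Qed.

Lemma gamma_fwd g h : good g -> good h -> forall x s,
  is_cell_of K s -> relint s x -> sat K V (FGamma g h) x -> satM K V (FGamma g h) s.
Proof.
move=> IHg IHh x s cs xs [p [pc [pQ [p0 [pS [p1Q p1h]]]]]].
pose G u := exists rho j, chain g s rho j /\ relint (rho j) (p u).
have cellof u : 0 <= u <= 1 -> exists t, is_cell_of K t /\ relint t (p u).
  by move=> u01; apply: (P_cell SC); exact: pQ.
have locG u : 0 < u < 1 -> exists2 e : R, 0 < e & forall b, 0 < b < 1 ->
    `|u - b| < e -> (G u <-> G b).
  move=> /andP[u0 u1].
  have [tau [ctau rtau]] := cellof u ltac:(apply/andP; split; lra).
  have [e e0 He] := loc pc (t := u) ltac:(apply/andP; split; lra) ctau rtau.
  exists e => // b /andP[b0 b1] ub.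
  have [tb [ctb rtb]] := cellof b ltac:(apply/andP; split; lra).
  have taub := He b ltac:(apply/andP; split; lra) ub tb ctb.1 rtb.
  have gb : satM K V g tb.
    by apply/(IHg _ _ ctb rtb); have := pS b; rewrite b0 b1 => /(_ isT) [].
  have gu : satM K V g tau.
    by apply/(IHg _ _ ctau rtau); have := pS u; rewrite u0 u1 => /(_ isT) [].
  split.
    move=> [rho [j [ch rj]]].
    have ej : rho j = tau.
      by apply: (cell_uniq SC _ ctau.1 rj rtau); case: ch => _ _ /(_ j (leqnn _)) [].
    exists (fun i => if (i <= j)%N then rho i else tb), j.+1; split.
      by apply: chain_ext => //; left; rewrite ej.
    by rewrite ltnn.
  move=> [rho [j [ch rj]]].
  have ej : rho j = tb.
    by apply: (cell_uniq SC _ ctb.1 rj rtb); case: ch => _ _ /(_ j (leqnn _)) [].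
  exists (fun i => if (i <= j)%N then rho i else tau), j.+1; split.
    by apply: chain_ext => //; right; rewrite ej.
  by rewrite ltnn.
have p0s : relint s (p 0) by rewrite p0.
have [e0 e00 He0] := loc pc (t := 0) ltac:(apply/andP; split; lra) cs p0s.
have startG b : 0 < b < 1 -> b < e0 -> G b.
  move=> /andP[b0 b1] be.
  have [tb [ctb rtb]] := cellof b ltac:(apply/andP; split; lra).
  have sb := He0 b ltac:(apply/andP; split; lra)
    ltac:(by rewrite sub0r normrN gtr0_norm) tb ctb.1 rtb.
  exists (fun i => if i == 0%N then s else tb), 1%N; split => //.
  split => //.
  - by move=> i; case: eqP.
  - by move=> i; rewrite ltnS leqn0 => /eqP ->; left.
  - move=> i i1 i1'; have -> : i = 1%N by lia.
    by apply/(IHg _ _ ctb rtb); have := pS b; rewrite b0 b1 => /(_ isT) [].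
have allG t : 0 < t < 1 -> G t.
  move=> /andP[t0 t1].
  pose a := minr (e0 / 2) (t / 2).
  have a0 : 0 < a by rewrite lt_min !divr_gt0.
  have at' : a < t by rewrite gt_min; apply/orP; right; lra.
  have ae : a < e0 by rewrite gt_min; apply/orP; left; lra.
  have Ga : G a by apply: startG => //; apply/andP; split; lra.
  apply: contrapT => nGt.
  pose f u : R := if pselect (G u) then 1 else 0.
  have fc : {within `[a, t]%classic, continuous f}.
    apply/subspace_continuousP => c; rewrite /= in_itv /= => /andP[ac ct].
    have [e e0' He] := locG c ltac:(apply/andP; split; lra).
    have E : {near within `[a, t]%classic (nbhs c), (fun=> f c) =1 f}.
      change (nbhs c (fun b => `[a, t]%classic b -> f c = f b)).
      apply/nbhs_ballP; exists e => // b cb; rewrite /= in_itv /= => /andP[ab bt].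
      have := He b ltac:(apply/andP; split; lra) cb.
      rewrite /f; case: pselect => Gc; case: pselect => Gb //.
        by move=> [/(_ Gc)].
      by move=> [_ /(_ Gb)].
    apply: (cvg_trans (near_eq_cvg E)); exact: cvg_cst.
  have := IVT (v := 2^-1) (ltW at') fc.
  have fa : f a = 1 by rewrite /f; case: pselect.
  have ft : f t = 0 by rewrite /f; case: pselect.
  rewrite fa ft.
  rewrite (_ : minr 1 0 = 0); last by rewrite /minr; case: ifP => //; lra.
  rewrite (_ : maxr 1 0 = 1); last by rewrite /maxr; case: ifP => //; lra.
  case=> [|c _]; first by apply/andP; split; lra.
  by rewrite /f; case: (pselect (G c)) => ? /=; lra.
have [tend [ctend rtend]] := cellof 1 ltac:(apply/andP; split; lra).
have [e1 e10 He1] := loc pc (t := 1) ltac:(apply/andP; split; lra) ctend rtend.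
pose b := maxr (2^-1) (1 - e1 / 2).
have b0 : 0 < b by rewrite lt_max; apply/orP; left; lra.
have b1 : b < 1 by rewrite gt_max; apply/andP; split; lra.
have be : `|1 - b| < e1.
  rewrite gtr0_norm; last lra.
  have : 1 - e1 / 2 <= b by rewrite le_max lexx orbT.
  lra.
have [rho [j [ch rj]]] := allG b ltac:(apply/andP; split; lra).
have ctb : is_cell_of K (rho j) by case: ch => _ _ /(_ j (leqnn _)).
have tb := He1 b ltac:(apply/andP; split; lra) be (rho j) ctb.1 rj.
apply: (chain_end ch ctend tb).
by apply/(IHh _ _ ctend rtend).
Qed.

Lemma all_good f : good f.
Proof.
elim: f => [|p|g IHg|g IHg h IHh|g IHg|g IHg h IHh] x s cs xs /=.
- by [].
- split; last by apply.
  case: (coh p) => C [HC Ve]; rewrite Ve => -[s0 C0 x0] y ys.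
  have e : s0 = s := cell_uniq SC (HC _ C0).1 cs.1 x0 xs.
  by rewrite Ve; exists s0 => //; rewrite e.
- by rewrite (IHg x s cs xs).
- by rewrite (IHg x s cs xs) (IHh x s cs xs).
- split.
    move=> [U [oU [Ux HU]]] t ct st.
    have [y [Uy yt]] := approach st (relint_hull xs) ct.2 oU Ux.
    have Py : P y := hullP ct.1 (relint_hull yt).
    have [_ gy] := HU y (conj Uy Py).
    by apply/(IHg y t ct yt).
  move=> H; have [U [oU Ux HU]] := star SC cs.1 xs.
  exists U; split => //; split => // y [Uy Py].
  have [t [ct yt]] := P_cell SC Py.
  split => //; apply/(IHg y t ct yt); apply: H => //.
  exact: (HU y t Uy ct.1 yt).
- split; [exact: gamma_fwd|exact: gamma_back].
Qed.
End Main.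

Theorem mainTheorem12 (R : realType) (m : nat) (AP : finType)
    (K : {fset {fset 'rV[R]_m}}) (V : AP -> set 'rV[R]_m) :
  simplicial_complex K -> coherent K V ->
  forall (x : 'rV[R]_m) (sigma : {fset 'rV[R]_m}),
    is_cell_of K sigma -> relint sigma x ->
    forall phi : slcs AP, sat K V phi x <-> satM K V phi sigma.
Proof.
by move=> SC coh x sigma cs xs phi; exact: (all_good SC coh phi cs xs).
Qed.
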